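(* Let $\mathcal{X}=\prod_{i=1}^{p}\mathcal{X}_i$, where each $\mathcal{X}_i\subseteq\mathbb{R}^{n_i}$ is closed and convex, and write $\mathbf{x}=(\mathbf{x}(1),\dots,\mathbf{x}(p))$ with $\mathbf{x}(i)=\mathbf{U}_i^{\mathrm T}\mathbf{x}\in\mathbb{R}^{n_i}$ the $i$-th block. Let $f\in C^1(\mathcal{X},\mathbb{R})$ have block-coordinate Lipschitz gradient with block smoothness constants $(L_i)_{i=1}^p$, i.e. $\|\nabla_i f(\mathbf{x}+\mathbf{U}_i\mathbf{h}_i)-\nabla_i f(\mathbf{x})\|\le L_i\|\mathbf{h}_i\|$ for all $\mathbf{x}$ and $\mathbf{h}_i\in\mathbb{R}^{n_i}$, where $\nabla_i f:=\mathbf{U}_i^{\mathrm T}\nabla f$, and set $L:=\max_i L_i$. Let $h\in C(\mathcal{X},\mathbb{R})$ be $\alpha$-strongly convex with block-separable form $h(\mathbf{x})=\sum_{i=1}^p h_i(\mathbf{x}(i))$, and put $\Phi=f+h$ and $\Phi^*=\min_{\mathbf{x}\in\mathcal{X}}\Phi(\mathbf{x})$. Let $\omega$ be a distance generating function with modulus $\alpha$ whose prox-function is block separable, $V(\mathbf{x},\mathbf{z})=\sum_{i=1}^pV_i(\mathbf{x}(i),\mathbf{z}(i))$. Run coordinate mirror descent on $\Phi$ over $\mathcal{X}$ from $\mathbf{x}_0\in\mathcal{X}$ for $N$ outer iterations with all step sizes $\gamma_{k,i}:=\alpha/L$: set $\mathbf{x}_0^0=\mathbf{x}_0$; for each outer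 iteration $k$ and $i=1,\dots,p$, $$\mathbf{x}_k^i(i)\in\arg\min_{\mathbf{u}_i\in\mathcal{X}_i}\Big(\langle\nabla_i f(\mathbf{x}_k^{i-1}),\mathbf{u}_i\rangle+\tfrac{1}{\gamma_{k,i}}V_i(\mathbf{u}_i,\mathbf{x}_k^{i-1}(i))+h_i(\mathbf{u}_i)\Big),\qquad \mathbf{x}_k^i(j)=\mathbf{x}_k^{i-1}(j)\ (j\neq i),$$ and $\mathbf{x}_{k+1}^0:=\mathbf{x}_k^p$, $\mathbf{x}_k:=\mathbf{x}_k^0$. Define $\mathbf{g}_{\mathcal{X},k,i}:=\frac{1}{\gamma_{k,i}}\big(\mathbf{x}_k^{i-1}(i)-\mathbf{x}_k^{i}(i)\big)$, $\Delta(\mathbf{x}_k,\mathbf{x}_{k-1}):=\sum_{i=1}^p\|\mathbf{g}_{\mathcal{X},k,i}\|^2$, and $D:=\big((\Phi(\mathbf{x}_0)-\Phi^* )/L\big)^{1/2}$. Then $$\min_k\Delta(\mathbf{x}_k,\mathbf{x}_{k-1})\le\frac{D^2L}{N(\alpha^2/2L)}=\frac{2D^2L^2}{N\alpha^2},$$ the minimum being over the $N$ outer iterations.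
   Context: A distance generating function with modulus $\alpha>0$ (w.r.t. the Euclidean norm) is a continuously differentiable $\omega:\mathcal{X}\to\mathbb{R}$ with $\langle\mathbf{x}-\mathbf{z},\nabla\omega(\mathbf{x})-\nabla\omega(\mathbf{z})\rangle\ge\alpha\|\mathbf{x}-\mathbf{z}\|^2$ for all $\mathbf{x},\mathbf{z}\in\mathcal{X}$; its prox-function (Bregman divergence) is $V(\mathbf{x},\mathbf{z})=\omega(\mathbf{x})-\omega(\mathbf{z})-\langle\nabla\omega(\mathbf{z}),\mathbf{x}-\mathbf{z}\rangle$. The matrices $\mathbf{U}_i\in\mathbb{R}^{n\times n_i}$ ($n=\sum_i n_i$) satisfy $\mathbf{x}(i)=\mathbf{U}_i^{\mathrm T}\mathbf{x}$ and $\mathbf{x}=\sum_i\mathbf{U}_i\mathbf{x}(i)$. The minimum $\Phi^*$ is assumed to exist. *)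

(* Defs.v *)
From HB Require Import structures.
From mathcomp Require Import all_boot all_order all_algebra.
From mathcomp Require Import all_classical all_reals all_analysis.
Set Implicit Arguments. Unset Strict Implicit. Unset Printing Implicit Defensive.
Import Order.TTheory GRing.Theory Num.Theory.
Import numFieldNormedType.Exports.
Local Open Scope classical_set_scope.
Local Open Scope ring_scope.

Definition dotv (R : realType) (m : nat) (a b : 'cV[R]_m) : R :=
  \sum_(j < m) a j 0 * b j 0.

Definition enorm (R : realType) (m : nat) (a : 'cV[R]_m) : R :=
  Num.sqrt (dotv a a).

Definition convex_cV (R : realType) (m : nat) (S : set 'cV[R]_m) : Prop :=
  forall a b (t : R), S a -> S b -> 0 <= t -> t <= 1 ->
    S (t *: a + (1 - t) *: b).

Definition is_gradient (R : realType) (m : nat)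
  (F : 'cV[R]_m -> R) (x g : 'cV[R]_m) : Prop :=
  differentiable F x /\ forall d : 'cV[R]_m, 'd F x d = dotv g d.

Definition is_argmin (R : realType) (m : nat)
  (S : set 'cV[R]_m) (F : 'cV[R]_m -> R) (u : 'cV[R]_m) : Prop :=
  S u /\ forall v, S v -> F u <= F v.

Definition strongly_convex_on (R : realType) (m : nat) (alpha : R)
  (S : set 'cV[R]_m) (F : 'cV[R]_m -> R) : Prop :=
  forall a b (t : R), S a -> S b -> 0 <= t -> t <= 1 ->
    F (t *: a + (1 - t) *: b) <=
      t * F a + (1 - t) * F b - alpha / 2 * t * (1 - t) * enorm (a - b) ^+ 2.

(* Main.v *)
Require Import Defs.
From HB Require Import structures.
From mathcomp Require Import all_boot all_order all_algebra.
From mathcomp Require Import all_classical all_reals all_analysis.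
From mathcomp Require Import ring lra.
Import Order.TTheory GRing.Theory Num.Theory.
Import numFieldNormedType.Exports.
Local Open Scope classical_set_scope.
Local Open Scope ring_scope.

Section SecH1.
Set Implicit Arguments. Unset Strict Implicit. Unset Printing Implicit Defensive.

Section Dot.
Variable R : realType.

Lemma dotvE m (a b : 'cV[R]_m) : dotv a b = (a^T *m b) 0 0.
Proof. rewrite /dotv mxE; apply: eq_bigr => j _; by rewrite mxE. Qed.

Lemma dotvC m (a b : 'cV[R]_m) : dotv a b = dotv b a.
Proof. rewrite /dotv; apply: eq_bigr => j _; by rewrite mulrC. Qed.

Lemma dotvDl m (a b c : 'cV[R]_m) : dotv (a + b) c = dotv a c + dotv b c.
Proof. rewrite /dotv -big_split; apply: eq_bigr => j _; by rewrite mxE mulrDl. Qed.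

Lemma dotvNl m (a c : 'cV[R]_m) : dotv (- a) c = - dotv a c.
Proof. rewrite /dotv -sumrN; apply: eq_bigr => j _; by rewrite mxE mulNr. Qed.

Lemma dotvBl m (a b c : 'cV[R]_m) : dotv (a - b) c = dotv a c - dotv b c.
Proof. by rewrite dotvDl dotvNl. Qed.

Lemma dotvZl m k (a c : 'cV[R]_m) : dotv (k *: a) c = k * dotv a c.
Proof. rewrite /dotv mulr_sumr; apply: eq_bigr => j _; by rewrite mxE mulrA. Qed.

Lemma dotvDr m (a b c : 'cV[R]_m) : dotv c (a + b) = dotv c a + dotv c b.
Proof. by rewrite dotvC dotvDl !(dotvC c). Qed.
Lemma dotvBr m (a b c : 'cV[R]_m) : dotv c (a - b) = dotv c a - dotv c b.
Proof. by rewrite dotvC dotvBl !(dotvC c). Qed.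
Lemma dotvZr m k (a c : 'cV[R]_m) : dotv c (k *: a) = k * dotv c a.
Proof. by rewrite dotvC dotvZl dotvC. Qed.

Lemma dotv_mul m k (a : 'cV[R]_m) (M : 'M[R]_(m, k)) (w : 'cV[R]_k) :
  dotv a (M *m w) = dotv (M^T *m a) w.
Proof. by rewrite !dotvE trmx_mul trmxK mulmxA. Qed.

Lemma dotv_ge0 m (a : 'cV[R]_m) : 0 <= dotv a a.
Proof. rewrite /dotv; apply: sumr_ge0 => j _; by rewrite -expr2 sqr_ge0. Qed.

Lemma enorm_sq m (a : 'cV[R]_m) : enorm a ^+ 2 = dotv a a.
Proof. by rewrite /enorm sqr_sqrtr // dotv_ge0. Qed.

Lemma enorm_ge0 m (a : 'cV[R]_m) : 0 <= enorm a.
Proof. exact: sqrtr_ge0. Qed.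

Lemma CS_sq m (a b : 'cV[R]_m) : dotv a b ^+ 2 <= dotv a a * dotv b b.
Proof.
set A := dotv a a; set B := dotv b b; set C := dotv a b.
have key s : 0 <= A * s ^+ 2 - 2 * C * s + B.
  have := dotv_ge0 (s *: a - b).
  rewrite dotvBl !dotvBr !dotvZl !dotvZr (dotvC b a) -/A -/B -/C.
  move=> H; apply: (le_trans H); rewrite le_eqVlt; apply/orP; left; apply/eqP; ring.
have A0 : 0 <= A by apply: dotv_ge0.
have B0 : 0 <= B by apply: dotv_ge0.
case: (ltrP 0 A) => [Apos|Ale].
  have := key (C / A).
  have -> : A * (C / A) ^+ 2 - 2 * C * (C / A) + B = B - C ^+ 2 / A.
    by field; rewrite gt_eqF.
  rewrite subr_ge0 ler_pdivrMr //; by rewrite mulrC.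
have A00 : A = 0 by apply/eqP; rewrite eq_le Ale A0.
rewrite A00 mul0r.
case: (eqVneq C 0) => [->|Cn0]; first by rewrite expr0n.
have := key ((B + 1) / (2 * C)).
rewrite A00 mul0r add0r.
have -> : - (2 * C * ((B + 1) / (2 * C))) + B = -1.
  by field.
by move=> H; lra.
Qed.

Lemma CS m (a b : 'cV[R]_m) : dotv a b <= enorm a * enorm b.
Proof.
rewrite /enorm -sqrtrM ?dotv_ge0 //.
apply: (le_trans (ler_norm _)).
rewrite -(sqrtr_sqr (dotv a b)).
by apply: ler_wsqrtr; apply: CS_sq.
Qed.

End Dot.

End SecH1.

Section SecH2.
Set Implicit Arguments. Unset Strict Implicit. Unset Printing Implicit Defensive.

Section Calc.
Variable R : realType.

Lemma line_is_derive n (F : 'cV[R]_n -> R) (g y e : 'cV[R]_n) (s : R) :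
  is_gradient F (y + s *: e) g ->
  is_derive s 1 (fun t => F (y + t *: e)) (dotv g e).
Proof.
move=> [dF dFe].
have eqf : (fun h : R => h^-1 *: (((fun t => F (y + t *: e)) \o shift s) (h *: 1)
              - (fun t => F (y + t *: e)) s))
         = (fun h : R => h^-1 *: ((F \o shift (y + s *: e)) (h *: e) - F (y + s *: e))).
  apply/funext => h /=.
  congr (_ *: (F _ - _)).
  by rewrite [h%:A]mulr1 scalerDl addrCA.
have dv : derivable F (y + s *: e) e by apply: diff_derivable.
constructor.
  by rewrite /derivable eqf; exact: dv.
by rewrite /derive eqf -/(derive F (y + s *: e) e) deriveE // dFe.
Qed.

Lemma quad_is_derive (a b x : R) :
  is_derive x 1 (fun s : R => a * s + b * s ^+ 2) (a + b * (2 * x)).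
Proof.
have H1 : is_derive x 1 (fun s : R => a * s) a.
  have := @is_deriveZ R R R id a x 1 1 (is_derive_id _ _).
  by rewrite /GRing.scale /= mulr1.
have H2 : is_derive x 1 (fun s : R => b * s ^+ 2) (b * (2 * x)).
  have := @is_deriveX R R (@id R) 2 x 1 1 (is_derive_id _ _).
  move=> H. have := @is_deriveZ R R R (id ^+ 2) b x 1 _ H.
  move=> K.
  have E : b * (2 * x) = b *: (2 * x ^+ 2.-1)%:A.
    by rewrite /GRing.scale /= mulr1 expr1.
  rewrite E; exact: K.
have := is_deriveD H1 H2.
done.
Qed.

Lemma mvt_le (phi dphi : R -> R) (t : R) : 0 < t ->
  (forall s, 0 <= s <= t -> is_derive s 1 phi (dphi s)) ->
  (forall s, 0 < s < t -> dphi s <= 0) -> phi t <= phi 0.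
Proof.
move=> t0 Hd Hneg.
have [c cin Hc] : exists2 c, c \in `]0, t[%R & phi t - phi 0 = dphi c * (t - 0).
  apply: MVT => //.
    move=> x; rewrite in_itv /= => /andP[x0 xt]; apply: Hd.
    by rewrite !ltW.
  apply: continuous_in_subspaceT => x; rewrite inE /= in_itv /= => xin.
  have /Hd [dv _] := xin.
  apply: differentiable_continuous.
  by apply/derivable1_diffP.
move: cin; rewrite in_itv /= => cin.
have := Hneg c cin. rewrite subr0 in Hc.
have : 0 <= dphi c * t -> False \/ True by right.
move=> _ Hle.
rewrite -subr_le0 Hc.
by apply: mulr_le0_ge0 => //; rewrite ltW.
Qed.
End Calc.

End SecH2.

Section SecH3.
Set Implicit Arguments. Unset Strict Implicit. Unset Printing Implicit Defensive.

Section Block.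
Variable R : realType.

Lemma vecY (V : lmodType R) (x x' : V) (s : R) :
  x' + s *: (x - x') = s *: x + (1 - s) *: x'.
Proof. by rewrite scalerBr scalerBl scale1r addrCA addrA addrC. Qed.
Lemma vecZ (V : lmodType R) (x x' : V) (s : R) :
  x + s *: - (x - x') = s *: x' + (1 - s) *: x.
Proof. by rewrite scalerN scalerBr scalerBl scale1r opprB addrCA addrA addrC. Qed.

Lemma lim_ge0 (B c : R) : 0 <= c -> (forall t, 0 < t -> t <= 1 -> 0 <= B + c * t) -> 0 <= B.
Proof.
move=> c0 H; case: (lerP 0 B) => // Bneg; exfalso.
pose t := - B / (- B + 2 * c).
have den : 0 < - B + 2 * c by lra.
have t0 : 0 < t by apply: divr_gt0; lra.
have t1 : t <= 1 by rewrite /t ler_pdivrMr //; lra.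
have := H t t0 t1.
have -> : B + c * t = B * (c - B) / (- B + 2 * c).
  by rewrite /t; field; rewrite gt_eqF.
rewrite pmulr_lge0 ?invr_gt0 // => HH.
have : 0 < c - B by lra.
move=> cb; have : B * (c - B) < 0 by nra.
lra.
Qed.

Lemma block_descent n (X : set 'cV[R]_n)
  (HXc : forall a b (t : R), X a -> X b -> 0 <= t -> t <= 1 -> X (t *: a + (1 - t) *: b))
  (f : 'cV[R]_n -> R) (gradf : 'cV[R]_n -> 'cV[R]_n)
  (Hgradf : forall x, X x -> is_gradient f x (gradf x))
  (h : 'cV[R]_n -> R) (alpha L : R) (Halpha : 0 < alpha) (HL : 0 < L)
  (Hh_sc : strongly_convex_on alpha X h)
  (omega : 'cV[R]_n -> R) (gradw : 'cV[R]_n -> 'cV[R]_n)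
  (Hgradw : forall x, X x -> is_gradient omega x (gradw x))
  (Hw_mod : forall x z, X x -> X z ->
      alpha * enorm (x - z) ^+ 2 <= dotv (x - z) (gradw x - gradw z))
  (x x' : 'cV[R]_n) (Hx : X x) (Hx' : X x')
  (Hlip : forall s, 0 <= s -> s <= 1 ->
     dotv (gradf x - gradf (x + s *: - (x - x'))) (x - x') <= L * s * dotv (x - x') (x - x'))
  (Hopt : forall t, 0 <= t -> t <= 1 ->
     0 <= t * dotv (gradf x) (x - x')
          + (L / alpha) * (omega (x' + t *: (x - x')) - omega x' - t * dotv (gradw x) (x - x'))
          + h (x' + t *: (x - x')) - h x') :
  f x' + h x' <= f x + h x - L / 2 * dotv (x - x') (x - x').
Proof.
set e := x - x'.
set dd := dotv e e.
set K := dotv (gradf x) e.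
have dd0 : 0 <= dd by apply: dotv_ge0.
have XZ s : 0 <= s -> s <= 1 -> X (x + s *: - e).
  by move=> s0 s1; rewrite /e vecZ; apply: HXc.
have XY s : 0 <= s -> s <= 1 -> X (x' + s *: e).
  by move=> s0 s1; rewrite /e vecY; apply: HXc.
have Hf : f x' <= f x - K + L / 2 * dd.
  pose chi := fun s : R => f (x + s *: - e) + (K * s + (- (L / 2) * dd) * s ^+ 2).
  pose dchi := fun s : R => dotv (gradf (x + s *: - e)) (- e) + (K + (- (L / 2) * dd) * (2 * s)).
  have : chi 1 <= chi 0.
    apply: (@mvt_le _ chi dchi) => //.
      move=> s /andP[s0 s1].
      apply: is_deriveD; last exact: quad_is_derive.
      apply: line_is_derive; apply: Hgradf; apply: XZ => //; lra.
    move=> s /andP[s0 s1].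
    have := Hlip s (ltW s0) (ltW s1).
    rewrite /dchi -/e -/dd dotvBl -/K => H.
    have -> : dotv (gradf (x + s *: - e)) (- e) = - dotv (gradf (x + s *: - e)) e.
      by rewrite dotvC dotvNl dotvC.
    lra.
  rewrite /chi scale1r scale0r addr0 expr1n expr0n /= mulr0 mulr1 mulr0 !addr0 mulr1.
  have -> : x + - e = x' by rewrite /e opprB addrCA subrr addr0.
  lra.
have Hw t : 0 < t -> t <= 1 ->
    omega (x' + t *: e) - omega x' - t * dotv (gradw x) e
      <= - alpha * dd * t + alpha / 2 * dd * t ^+ 2.
  move=> t0 t1.
  pose psi := fun s : R => omega (x' + s *: e)
     + ((- dotv (gradw x) e + alpha * dd) * s + (- (alpha / 2) * dd) * s ^+ 2).
  pose dpsi := fun s : R => dotv (gradw (x' + s *: e)) e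
     + ((- dotv (gradw x) e + alpha * dd) + (- (alpha / 2) * dd) * (2 * s)).
  have : psi t <= psi 0.
    apply: (@mvt_le _ psi dpsi) => //.
      move=> s /andP[s0 s1].
      apply: is_deriveD; last exact: quad_is_derive.
      apply: line_is_derive; apply: Hgradw; apply: XY => //; lra.
    move=> s /andP[s0 s1].
    have s1' : s < 1 by lra.
    have := Hw_mod x (x' + s *: e) Hx (XY s (ltW s0) (ltW (lt_le_trans s1 t1))).
    have -> : x - (x' + s *: e) = (1 - s) *: e.
      by rewrite scalerBl scale1r /e opprD addrA.
    rewrite enorm_sq !dotvZl !dotvZr dotvBr -/dd => H.
    have H' : alpha * ((1 - s) * dd) <= dotv e (gradw x) - dotv e (gradw (x' + s *: e)).
      have s1p : 0 < 1 - s by lra.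
      rewrite -(ler_pM2l s1p) mulrCA; exact: H.
    rewrite /dpsi (dotvC e) (dotvC e) in H' *.
    lra.
  rewrite /psi scale0r addr0 mulr0 expr0n /= mulr0 !addr0.
  lra.
have Hh t : 0 <= t -> t <= 1 -> h (x' + t *: e) <= t * h x + (1 - t) * h x'.
  move=> t0 t1; rewrite /e vecY.
  have := Hh_sc x x' t Hx Hx' t0 t1.
  move=> H; apply: (le_trans H).
  rewrite lerBlDr lerDl.
  apply: mulr_ge0; last by rewrite exprn_ge0 // enorm_ge0.
  apply: mulr_ge0; last lra.
  apply: mulr_ge0; last lra.
  apply: mulr_ge0; lra.
have HB : 0 <= K - L * dd + h x - h x'.
  have -> : K - L * dd + h x - h x' = (K - L * dd + h x - h x') + 0 by rewrite addr0.
  apply: (@lim_ge0 _ (L / 2 * dd)).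
    apply: mulr_ge0 => //; apply: divr_ge0; lra.
  move=> t t0 t1.
  have H1 := Hopt t (ltW t0) t1; rewrite -/e -/K in H1.
  have H2 := Hw t t0 t1.
  have H3 := Hh t (ltW t0) t1.
  have La : 0 < L / alpha by apply: divr_gt0.
  have E : (L / alpha) * (- alpha * dd * t + alpha / 2 * dd * t ^+ 2)
           = - L * dd * t + L / 2 * dd * t ^+ 2.
    by field; rewrite gt_eqF.
  have H2' := ler_wpM2l (ltW La) H2; rewrite E in H2'.
  have : 0 <= t * (K - L * dd + h x - h x' + L / 2 * dd * t).
    move: H1 H2' H3.
    set W := L / alpha * _.
    set hY := h _.
    move=> H1 H2' H3.
    have -> : t * (K - L * dd + h x - h x' + L / 2 * dd * t)
       = t * K + (- L * dd * t + L / 2 * dd * t ^+ 2) + (t * h x + (1 - t) * h x') - h x'.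
      by ring.
    lra.
  by rewrite pmulr_rge0 // addr0.
lra.
Qed.
End Block.

End SecH3.

Section SecH4.
Set Implicit Arguments. Unset Strict Implicit. Unset Printing Implicit Defensive.

Lemma enormZ (R : realType) m (c : R) (a : 'cV[R]_m) : enorm (c *: a) = `|c| * enorm a.
Proof.
by rewrite /enorm dotvZl dotvZr mulrA -expr2 sqrtrM ?sqr_ge0 // sqrtr_sqr.
Qed.

Lemma enormBC (R : realType) m (a b : 'cV[R]_m) : enorm (a - b) = enorm (b - a).
Proof. by rewrite -opprB -scaleN1r enormZ normrN normr1 mul1r. Qed.

End SecH4.

Theorem proposition1
  (R : realType) (p : nat) (ni : 'I_p -> nat) (n : nat)
  (U : forall i : 'I_p, 'M[R]_(n, ni i))
  (* block structure: x(i) = U_i^T x, x = sum_i U_i x(i) *)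
  (Hn : n = (\sum_(i < p) ni i)%N)
  (HUsum : \sum_(i < p) U i *m (U i)^T = 1%:M)
  (HUid : forall i : 'I_p, (U i)^T *m U i = 1%:M)
  (HUorth : forall i j : 'I_p, i != j -> (U i)^T *m U j = 0)
  (* feasible set X = prod_i X_i, each X_i closed and convex *)
  (Xi : forall i : 'I_p, set 'cV[R]_(ni i))
  (HXcl : forall i, closed (Xi i))
  (HXcv : forall i, convex_cV (Xi i))
  (X : set 'cV[R]_n)
  (HX : X = [set x | forall i, Xi i ((U i)^T *m x)])
  (* smooth part f, C^1 on X, with gradient gradf *)
  (f : 'cV[R]_n -> R) (gradf : 'cV[R]_n -> 'cV[R]_n)
  (Hgradf : forall x, X x -> is_gradient f x (gradf x))
  (Hgradf_cont : {within X, continuous gradf})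
  (* block-coordinate Lipschitz gradient *)
  (Li : 'I_p -> R)
  (HLi : forall (i : 'I_p) (x : 'cV[R]_n) (hh : 'cV[R]_(ni i)),
      X x -> X (x + U i *m hh) ->
      enorm ((U i)^T *m gradf (x + U i *m hh) - (U i)^T *m gradf x)
        <= Li i * enorm hh)
  (L : R) (HLdef : L = \big[Num.max/0]_(i < p) Li i) (HLpos : 0 < L)
  (* nonsmooth part h, continuous, alpha-strongly convex, block separable *)
  (alpha : R) (Halpha : 0 < alpha)
  (h : 'cV[R]_n -> R) (hi : forall i : 'I_p, 'cV[R]_(ni i) -> R)
  (Hh_cont : {within X, continuous h})
  (Hh_sc : strongly_convex_on alpha X h)
  (Hh_sep : forall x, X x -> h x = \sum_(i < p) hi i ((U i)^T *m x))
  (* optimal value Phi^* of Phi = f + h over X (attained) *)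
  (Phistar : R)
  (HPhistar : (exists2 xs, X xs & f xs + h xs = Phistar) /\
              (forall x, X x -> Phistar <= f x + h x))
  (* distance generating function omega with modulus alpha *)
  (omega : 'cV[R]_n -> R) (gradw : 'cV[R]_n -> 'cV[R]_n)
  (Hgradw : forall x, X x -> is_gradient omega x (gradw x))
  (Hgradw_cont : {within X, continuous gradw})
  (Hw_mod : forall x z, X x -> X z ->
      alpha * enorm (x - z) ^+ 2 <= dotv (x - z) (gradw x - gradw z))
  (* block separable prox-function V *)
  (Vi : forall i : 'I_p, 'cV[R]_(ni i) -> 'cV[R]_(ni i) -> R)
  (HV_sep : forall x z, X x -> X z ->
      omega x - omega z - dotv (gradw z) (x - z)
        = \sum_(i < p) Vi i ((U i)^T *m x) ((U i)^T *m z))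
  (* coordinate mirror descent iterates xs k i = x_k^i, gamma = alpha/L *)
  (x0 : 'cV[R]_n) (Hx0 : X x0)
  (xs : nat -> nat -> 'cV[R]_n)
  (Hxs0 : xs 0%N 0%N = x0)
  (Hxsnext : forall k, xs k.+1 0%N = xs k p)
  (Hxsstep : forall (k : nat) (i : 'I_p),
      (forall j : 'I_p, j != i ->
         (U j)^T *m xs k i.+1 = (U j)^T *m xs k i) /\
      is_argmin (Xi i)
        (fun u => dotv ((U i)^T *m gradf (xs k i)) u
                  + (alpha / L)^-1 * Vi i u ((U i)^T *m xs k i)
                  + hi i u)
        ((U i)^T *m xs k i.+1))
  (N : nat) (HN : (0 < N)%N) :
  let gamma := alpha / L in
  let Delta k := \sum_(i < p)
      enorm (gamma^-1 *: ((U i)^T *m xs k i - (U i)^T *m xs k i.+1)) ^+ 2 in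
  let D := Num.sqrt ((f x0 + h x0 - Phistar) / L) in
  exists2 k : nat, (k < N)%N &
    Delta k <= D ^+ 2 * L / (N%:R * (alpha ^+ 2 / (2 * L))).
Proof.
move=> gamma Delta D.
pose Phi := fun y => f y + h y.
have HXc : forall a b (t : R), X a -> X b -> 0 <= t -> t <= 1 -> X (t *: a + (1 - t) *: b).
  move=> a b t; rewrite HX /= => Ha Hb t0 t1 j.
  rewrite mulmxDr -!scalemxAr; exact: (HXcv j _ _ t (Ha j) (Hb j) t0 t1).
have Hmem : forall k i, (i <= p)%N -> X (xs k i).
  have step : forall k, X (xs k 0%N) -> forall i, (i <= p)%N -> X (xs k i).
    move=> k H0; elim=> [|i IH] // ip.
    have ip' : (i < p)%N := ip.
    have Hi := IH (ltnW ip).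
    have [Hoth [Harg _]] := Hxsstep k (Ordinal ip').
    move: Hi; rewrite HX /= => Hi j.
    case: (eqVneq j (Ordinal ip')) => [->|jn]; first exact: Harg.
    rewrite (Hoth j jn); exact: Hi j.
  elim=> [|k IH]; first by apply: step; rewrite Hxs0.
  apply: step; rewrite Hxsnext; exact: IH p (leqnn p).
have HLi_le i : Li i <= L by rewrite HLdef; exact: le_bigmax.
pose ddk k (i : 'I_p) := dotv ((U i)^T *m xs k i - (U i)^T *m xs k i.+1)
                              ((U i)^T *m xs k i - (U i)^T *m xs k i.+1).
have Hblock : forall k (i : 'I_p), Phi (xs k i.+1) <= Phi (xs k i) - L / 2 * ddk k i.
  move=> k i.
  rewrite /ddk.
  set x := xs k i; set x' := xs k i.+1.
  have Hx : X x := Hmem k i (ltnW (ltn_ord i)).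
  have Hx' : X x' := Hmem k i.+1 (ltn_ord i).
  have [Hoth [_ Hargmin]] := Hxsstep k i.
  rewrite -/x -/x' in Hoth Hargmin.
  set w := (U i)^T *m x - (U i)^T *m x'.
  have He : x - x' = U i *m w.
    rewrite -[x - x']mul1mx -HUsum mulmx_suml (bigD1 i) //= big1 ?addr0.
      by rewrite -mulmxA mulmxBr.
    move=> j jn; rewrite -mulmxA mulmxBr (Hoth j jn) subrr mulmx0 //.
  have Hdd : dotv (x - x') (x - x') = dotv w w.
    by rewrite He dotv_mul mulmxA HUid mul1mx.
  have Hoth' : forall j, j != i -> forall c, (U j)^T *m (x' + U i *m c) = (U j)^T *m x.
    move=> j jn c; rewrite mulmxDr mulmxA (HUorth j i jn) mul0mx addr0; exact: Hoth j jn.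
  have HUi c : (U i)^T *m (x' + U i *m c) = (U i)^T *m x' + c.
    by rewrite mulmxDr mulmxA HUid mul1mx.
  rewrite -Hdd.
  apply: (@block_descent R n X HXc f gradf Hgradf h alpha L Halpha HLpos Hh_sc
            omega gradw Hgradw Hw_mod x x' Hx Hx').
  - move=> s s0 s1.
    have Zeq : x + s *: - (x - x') = x + U i *m (- s *: w).
      by rewrite He -scalemxAr scaleNr scalerN.
    have XZ : X (x + s *: - (x - x')) by rewrite vecZ; apply: HXc.
    have Hl := HLi i x (- s *: w) Hx (eq_ind _ X XZ _ Zeq).
    rewrite Zeq Hdd He dotv_mul mulmxBr.
    apply: le_trans (CS _ _) _.
    rewrite enormBC.
    apply: le_trans (ler_wpM2r (enorm_ge0 w) Hl) _.
    rewrite enormZ normrN ger0_norm // -enorm_sq.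
    have Hp : 0 <= (L - Li i) * (s * enorm w ^+ 2).
      apply: mulr_ge0; first by have := HLi_le i; lra.
      by apply: mulr_ge0 => //; apply: exprn_ge0; apply: enorm_ge0.
    lra.
  - move=> t t0 t1.
    set Y := x' + t *: (x - x').
    have YU : Y = x' + U i *m (t *: w) by rewrite /Y He scalemxAr.
    have XY : X Y by rewrite /Y vecY; apply: HXc.
    have XYi : Xi i ((U i)^T *m Y) by move: XY; rewrite HX => XY; exact: XY i.
    have Hle := Hargmin _ XYi; rewrite /= in Hle.
    have V1 := HV_sep Y x XY Hx; have V2 := HV_sep x' x Hx' Hx.
    have H1 := Hh_sep Y XY; have H2 := Hh_sep x' Hx'.
    rewrite (bigD1 i) //= in V1; rewrite (bigD1 i) //= in V2.
    rewrite (bigD1 i) //= in H1; rewrite (bigD1 i) //= in H2.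
    have E1 : \sum_(j < p | j != i) Vi j ((U j)^T *m Y) ((U j)^T *m x)
            = \sum_(j < p | j != i) Vi j ((U j)^T *m x) ((U j)^T *m x).
      by apply: eq_bigr => j jn; rewrite YU Hoth'.
    have E2 : \sum_(j < p | j != i) Vi j ((U j)^T *m x') ((U j)^T *m x)
            = \sum_(j < p | j != i) Vi j ((U j)^T *m x) ((U j)^T *m x).
      by apply: eq_bigr => j jn; rewrite Hoth.
    have E3 : \sum_(j < p | j != i) hi j ((U j)^T *m Y)
            = \sum_(j < p | j != i) hi j ((U j)^T *m x).
      by apply: eq_bigr => j jn; rewrite YU Hoth'.
    have E4 : \sum_(j < p | j != i) hi j ((U j)^T *m x')
            = \sum_(j < p | j != i) hi j ((U j)^T *m x).
      by apply: eq_bigr => j jn; rewrite Hoth.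
    rewrite E1 in V1; rewrite E2 in V2; rewrite E3 in H1; rewrite E4 in H2.
    set C := \sum_(j < p | j != i) Vi j _ _ in V1 V2.
    set Hr := \sum_(j < p | j != i) hi j _ in H1 H2.
    have Eg : dotv ((U i)^T *m gradf x) ((U i)^T *m Y)
        = dotv ((U i)^T *m gradf x) ((U i)^T *m x') + t * dotv (gradf x) (x - x').
      have -> : dotv (gradf x) (x - x') = dotv ((U i)^T *m gradf x) w.
        by rewrite He dotv_mul.
      by rewrite [in LHS]YU HUi dotvDr dotvZr.
    have Ew : dotv (gradw x) (Y - x) = dotv (gradw x) (x' - x) + t * dotv (gradw x) (x - x').
      rewrite -(dotvZr t (x - x') (gradw x)) -dotvDr; congr dotv.
      by rewrite /Y addrAC.
    have EV1 : Vi i ((U i)^T *m Y) ((U i)^T *m x)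
        = omega Y - omega x - dotv (gradw x) (x' - x) - t * dotv (gradw x) (x - x') - C.
      by move: V1; rewrite Ew; lra.
    have EV2 : Vi i ((U i)^T *m x') ((U i)^T *m x)
        = omega x' - omega x - dotv (gradw x) (x' - x) - C.
      by move: V2; lra.
    rewrite EV1 EV2 Eg invf_div in Hle.
    rewrite H1 H2.
    move: Hle; set c := L / alpha; move=> Hle.
    lra.
have Hrow : forall k i, (i <= p)%N ->
    Phi (xs k i) <= Phi (xs k 0%N) - L / 2 * \sum_(j < p | (j < i)%N) ddk k j.
  move=> k; elim=> [|i IH] ip.
    by rewrite big_pred0 // mulr0 subr0.
  have ip' : (i < p)%N := ip.
  have := Hblock k (Ordinal ip'); rewrite /=.
  have -> : \sum_(j < p | (j < i.+1)%N) ddk k j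
         = \sum_(j < p | (j < i)%N) ddk k j + ddk k (Ordinal ip').
    rewrite (bigD1 (Ordinal ip')) //= addrC; congr (_ + _).
    apply: eq_bigl => j; rewrite ltnS leq_eqVlt -val_eqE /=.
    by case: (ltngtP j i).
  have := IH (ltnW ip); lra.
have Hk : forall k, Delta k <= (2 * L / alpha ^+ 2) * (Phi (xs k 0%N) - Phi (xs k.+1 0%N)).
  move=> k.
  have := Hrow k p (leqnn p).
  have -> : \sum_(j < p | (j < p)%N) ddk k j = \sum_(j < p) ddk k j.
    by apply: eq_bigl => j; rewrite ltn_ord.
  rewrite -Hxsnext => HS.
  have -> : Delta k = (L / alpha) ^+ 2 * \sum_(j < p) ddk k j.
    rewrite /Delta mulr_sumr; apply: eq_bigr => j _.
    rewrite enorm_sq dotvZl dotvZr /gamma invf_div /ddk; ring.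
  have E : (L / alpha) ^+ 2 * \sum_(j < p) ddk k j
      = (2 * L / alpha ^+ 2) * (L / 2 * \sum_(j < p) ddk k j).
    by field; rewrite gt_eqF.
  rewrite E; apply: ler_wpM2l.
    by apply: divr_ge0; [lra | apply: exprn_ge0; lra].
  lra.
set c := 2 * L / alpha ^+ 2.
have c0 : 0 <= c by apply: divr_ge0; [lra | apply: exprn_ge0; lra].
have Hsum : forall m, \sum_(k < m) Delta k <= c * (Phi x0 - Phi (xs m 0%N)).
  elim=> [|m IH].
    by rewrite big_ord0 Hxs0 subrr mulr0.
  rewrite big_ord_recr /=.
  have := Hk m; rewrite -/c => Hm.
  have -> : c * (Phi x0 - Phi (xs m.+1 0%N))
      = c * (Phi x0 - Phi (xs m 0%N)) + c * (Phi (xs m 0%N) - Phi (xs m.+1 0%N)) by ring.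
  exact: lerD.
have [_ Hstar] := HPhistar.
have HN0 := Hstar _ (Hmem N 0%N (leq0n p)).
have H00 := Hstar _ Hx0.
have HD : D ^+ 2 = (f x0 + h x0 - Phistar) / L.
  by rewrite /D sqr_sqrtr //; apply: divr_ge0; lra.
case: (pselect (exists2 k : nat, (k < N)%N &
   Delta k <= D ^+ 2 * L / (N%:R * (alpha ^+ 2 / (2 * L))))) => // Hno.
exfalso.
set B := D ^+ 2 * L / (N%:R * (alpha ^+ 2 / (2 * L))) in Hno.
have Hall : forall k : 'I_N, B < Delta k.
  move=> k; rewrite ltNge; apply/negP => Hk'; apply: Hno; exists k => //.
have Hlt : \sum_(k < N) B < \sum_(k < N) Delta k.
  apply: ltr_sum; last by move=> k _; exact: Hall.
  by rewrite has_predT /index_enum -enumT size_enum_ord.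
rewrite sumr_const card_ord -mulr_natl in Hlt.
have Npos : 0 < N%:R :> R by rewrite ltr0n.
have EB : N%:R * B = c * (f x0 + h x0 - Phistar).
  rewrite /B HD /c; field.
  by rewrite !gt_eqF // ?Npos ?HLpos ?Halpha // exprn_gt0.
have := Hsum N.
have : c * (Phi x0 - Phi (xs N 0%N)) <= c * (f x0 + h x0 - Phistar).
  apply: ler_wpM2l => //; rewrite /Phi; lra.
rewrite /Phi in Hlt EB *; lra.
Qed.
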